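(* Let $C\le A$ be groups and $2\le n\le\infty$. If $a\in A\setminus C$ is $n$-RF (respectively $n$-RTF) rel $C$, then so is every element $\tilde a\in CaC$.
   Context: For a group $G$, subgroup $D$, and $2\le n\le\infty$: $a\in G\setminus D$ is $n$-RF rel $D$ if $a^{e_1}d_1\cdots a^{e_k}d_k\ne\mathrm{id}$ for all $k\ge1$, $e_i\in\{\pm1\}$, $d_i\in D$ such that $d_i\ne\mathrm{id}$ whenever $e_i=-e_{i+1}$ (indices mod $k$), and fewer than $n$ of the $e_i$ are $+1$ and fewer than $n$ are $-1$. $a\in G\setminus D$ is $n$-RTF rel $D$ if $ad_1ad_2\cdots ad_k\ne\mathrm{id}$ for all $d_i\in D$ and $1\le k<n$. *)

(* Defs.v *)
From Stdlib Require Import List Arith PeanoNat.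
Import ListNotations.

Record group_laws {G : Type} (mul : G -> G -> G) (e : G) (inv : G -> G) : Prop := {
  mulA : forall x y z, mul x (mul y z) = mul (mul x y) z;
  mul1g : forall x, mul e x = x;
  mulg1 : forall x, mul x e = x;
  mulVg : forall x, mul (inv x) x = e;
  mulgV : forall x, mul x (inv x) = e
}.

Record subgroup {G : Type} (mul : G -> G -> G) (e : G) (inv : G -> G) (D : G -> Prop) : Prop := {
  sub1 : D e;
  subM : forall x y, D x -> D y -> D (mul x y);
  subV : forall x, D x -> D (inv x)
}.

(* Extended naturals 2..infinity: None = infinity. *)
Definition natinf := option nat.
Definition lt_inf (m : nat) (n : natinf) : Prop :=
  match n with None => True | Some k => m < k end.
Definition le_inf (m : nat) (n : natinf) : Prop :=
  match n with None => True | Some k => m <= k end.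

Section Words.
Context {G : Type} (mul : G -> G -> G) (e : G) (inv : G -> G).

Definition apow (a : G) (b : bool) : G := if b then a else inv a.

(* a^{e_1} d_1 a^{e_2} d_2 ... a^{e_k} d_k, with s = [(e_1,d_1); ...; (e_k,d_k)] *)
Definition word_prod (a : G) (s : list (bool * G)) : G :=
  fold_right (fun p acc => mul (mul (apow a (fst p)) (snd p)) acc) e s.

Definition cyc_reduced (s : list (bool * G)) : Prop :=
  forall i, i < length s ->
    fst (nth i s (true, e)) = negb (fst (nth ((i + 1) mod length s) s (true, e))) ->
    snd (nth i s (true, e)) <> e.

Definition count_plus (s : list (bool * G)) : nat := length (filter (fun p => fst p) s).
Definition count_minus (s : list (bool * G)) : nat := length (filter (fun p => negb (fst p)) s).

Definition tword_prod (a : G) (ds : list G) : G :=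
  fold_right (fun d acc => mul (mul a d) acc) e ds.

Definition n_RF (D : G -> Prop) (n : natinf) (a : G) : Prop :=
  ~ D a /\
  forall s : list (bool * G),
    s <> [] ->
    Forall (fun p => D (snd p)) s ->
    cyc_reduced s ->
    lt_inf (count_plus s) n -> lt_inf (count_minus s) n ->
    word_prod a s <> e.

Definition n_RTF (D : G -> Prop) (n : natinf) (a : G) : Prop :=
  ~ D a /\
  forall ds : list G,
    Forall D ds -> 1 <= length ds -> lt_inf (length ds) n ->
    tword_prod a ds <> e.

End Words.

(* Main.v *)
Require Import Defs.
From Stdlib Require Import List Arith Lia.
Import ListNotations.

Section G.
Variables (A : Type) (mul : A -> A -> A) (e : A) (inv : A -> A).
Hypothesis HA : group_laws mul e inv.
Local Infix "*" := mul.

Lemma mA x y z : x * (y * z) = x * y * z. Proof. apply (mulA _ _ _ HA). Qed.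
Lemma m1 x : e * x = x. Proof. apply (mul1g _ _ _ HA). Qed.
Lemma m1r x : x * e = x. Proof. apply (mulg1 _ _ _ HA). Qed.
Lemma mV x : inv x * x = e. Proof. apply (mulVg _ _ _ HA). Qed.
Lemma mVr x : x * inv x = e. Proof. apply (mulgV _ _ _ HA). Qed.

Lemma inv_uniq x y : x * y = e -> y = inv x.
Proof. intros H. rewrite <- (m1 y), <- (mV x), <- mA, H, m1r. reflexivity. Qed.
Lemma invK x : inv (inv x) = x.
Proof. symmetry. apply inv_uniq. apply mV. Qed.
Lemma invM x y : inv (x * y) = inv y * inv x.
Proof. symmetry. apply inv_uniq.
  rewrite mA, <- (mA x y), mVr, m1r, mVr. reflexivity. Qed.
Lemma lcancel x y z : x * y = x * z -> y = z.
Proof. intros H. rewrite <- (m1 y), <- (m1 z), <- (mV x), <- !mA, H. reflexivity. Qed.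
Lemma conj_e y d : y * d * inv y = e -> d = e.
Proof. intros H. apply (lcancel y). rewrite m1r.
  rewrite <- (m1r (y * d)), <- (mV y), mA, H, m1. reflexivity. Qed.

Variables (c1 c2 a : A).
Definition at_ := c1 * a * c2.
Definition X (b : bool) := if b then c1 else inv c2.
Definition Y (b : bool) := if b then c2 else inv c1.

Lemma apow_at b : apow inv at_ b = X b * apow inv a b * Y b.
Proof. destruct b; simpl. reflexivity. unfold at_. rewrite !invM, mA. reflexivity. Qed.

Fixpoint T (s : list (bool * A)) (z : A) : list (bool * A) :=
  match s with
  | [] => []
  | (b, d) :: rest =>
    (b, Y b * d * match rest with [] => z | (b', _) :: _ => X b' end) :: T rest z
  end.

Definition headX (s : list (bool * A)) z :=
  match s with [] => z | (b, _) :: _ => X b end.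

Lemma word_T s z : word_prod mul e inv at_ s * z = headX s z * word_prod mul e inv a (T s z).
Proof.
  induction s as [|[b d] rest IH]; simpl.
  - rewrite m1, m1r. reflexivity.
  - rewrite <- mA, IH, apow_at. destruct rest as [|[b' d'] r]; simpl in *;
    rewrite !mA; reflexivity.
Qed.

Lemma map_fst_T s z : map fst (T s z) = map fst s.
Proof. induction s as [|[b d] rest IH]; simpl; [reflexivity| rewrite IH; reflexivity]. Qed.

Lemma length_T s z : length (T s z) = length s.
Proof. rewrite <- (length_map fst), map_fst_T, length_map. reflexivity. Qed.

Lemma nth_T s z i : i < length s ->
  snd (nth i (T s z) (true, e)) =
  Y (fst (nth i s (true, e))) * snd (nth i s (true, e)) *
  (if Nat.ltb (i + 1) (length s) then X (fst (nth (i + 1) s (true, e))) else z).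
Proof.
  revert i. induction s as [|[b d] rest IH]; intros i Hi; simpl in Hi. lia.
  destruct i as [|i].
  - simpl. destruct rest as [|[b' d'] r]; simpl; reflexivity.
  - simpl. rewrite IH by lia. simpl. reflexivity.
Qed.
End G.

Section G2.
Variables (A : Type) (mul : A -> A -> A) (e : A) (inv : A -> A).
Hypothesis HA : group_laws mul e inv.
Local Infix "*" := mul.

Lemma tword_conj c1 c2 a ds :
  tword_prod mul e (c1 * a * c2) ds * c1 =
  c1 * tword_prod mul e a (map (fun d => mul (mul c2 d) c1) ds).
Proof.
  induction ds as [|d ds IH]; simpl.
  - rewrite (m1 _ _ _ _ HA), (m1r _ _ _ _ HA). reflexivity.
  - rewrite <- (mA _ _ _ _ HA), IH, !(mA _ _ _ _ HA). reflexivity.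
Qed.

Lemma notC (C : A -> Prop) (HC : subgroup mul e inv C) c1 c2 a :
  C c1 -> C c2 -> ~ C a -> ~ C (c1 * a * c2).
Proof.
  intros h1 h2 ha hc. apply ha.
  assert (E : a = inv c1 * (c1 * a * c2) * inv c2).
  { rewrite <- !(mA _ _ _ _ HA), (mVr _ _ _ _ HA), (m1r _ _ _ _ HA), !(mA _ _ _ _ HA),
      (mV _ _ _ _ HA), (m1 _ _ _ _ HA). reflexivity. }
  rewrite E. apply (subM _ _ _ _ HC). apply (subM _ _ _ _ HC). apply (subV _ _ _ _ HC); auto.
  auto. apply (subV _ _ _ _ HC); auto.
Qed.
End G2.

Theorem lemma5p23 (A : Type) (mul : A -> A -> A) (e : A) (inv : A -> A)
  (HA : group_laws mul e inv) (C : A -> Prop) (HC : subgroup mul e inv C)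
  (n : natinf) (Hn : le_inf 2 n) (a : A) :
  (n_RF mul e inv C n a ->
     forall c1 c2, C c1 -> C c2 -> n_RF mul e inv C n (mul (mul c1 a) c2)) /\
  (n_RTF mul e C n a ->
     forall c1 c2, C c1 -> C c2 -> n_RTF mul e C n (mul (mul c1 a) c2)).
Proof.
  split.
  - intros [ha H] c1 c2 h1 h2. split. apply (notC _ _ _ _ HA C HC); auto.
    intros s Hne HF Hcyc Hp Hm Heq.
    destruct s as [|[b0 d0] s']; [congruence|].
    set (s := (b0, d0) :: s') in *.
    pose proof (word_T _ _ _ _ HA c1 c2 a s (X A inv c1 c2 b0)) as W.
    unfold at_ in W. rewrite Heq, (m1 _ _ _ _ HA) in W. simpl headX in W.
    assert (W' : word_prod mul e inv a (T A mul inv c1 c2 s (X A inv c1 c2 b0)) = e).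
    { symmetry. apply (lcancel _ _ _ _ HA (X A inv c1 c2 b0)). rewrite <- W, (m1r _ _ _ _ HA). reflexivity. }
    assert (HXY : forall b, C (X A inv c1 c2 b) /\ C (Y A inv c1 c2 b)).
    { intros []; simpl; split; auto; apply (subV _ _ _ _ HC); auto. }
    assert (Hcp : forall l : list (bool * A), count_plus l = length (filter (fun b => b) (map fst l))).
    { induction l as [|[b d] l IH]; [reflexivity|]. unfold count_plus in *; simpl.
      destruct b; simpl; rewrite ?IH; reflexivity. }
    assert (Hcm : forall l : list (bool * A), count_minus l = length (filter negb (map fst l))).
    { induction l as [|[b d] l IH]; [reflexivity|]. unfold count_minus in *; simpl.
      destruct b; simpl; rewrite ?IH; reflexivity. }
    assert (HFT : forall l z, C z -> Forall (fun p : bool * A => C (snd p)) l ->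
               Forall (fun p : bool * A => C (snd p)) (T A mul inv c1 c2 l z)).
    { induction l as [|[b d] l IH]; intros z hz hl; simpl; [constructor|].
      inversion hl; subst. constructor.
      - simpl. apply (subM _ _ _ _ HC); [apply (subM _ _ _ _ HC)|]; auto.
        apply HXY. destruct l as [|[b' d'] l']; auto. apply HXY.
      - apply IH; auto. }
    apply (H (T A mul inv c1 c2 s (X A inv c1 c2 b0))); auto.
    + intro E. apply (f_equal (@length _)) in E. rewrite length_T in E. simpl in E. discriminate.
    + apply HFT; auto. apply HXY.
    + intros i hi hneg. rewrite length_T in hi, hneg.
      rewrite <- !(map_nth fst), !map_fst_T, !(map_nth fst) in hneg.
      rewrite (nth_T _ _ _ _ _ _ _ _ _ hi).
      destruct (Nat.ltb (i + 1) (length s)) eqn:Hlt.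
      * apply Nat.ltb_lt in Hlt. rewrite Nat.mod_small in hneg by exact Hlt.
        intro E. apply (Hcyc i hi). rewrite Nat.mod_small by exact Hlt. exact hneg.
        revert E. rewrite hneg. destruct (fst (nth (i + 1) s (true, e))); simpl; intro E.
        -- rewrite <- (invK _ _ _ _ HA c1) in E at 2. exact (conj_e _ _ _ _ HA _ _ E).
        -- exact (conj_e _ _ _ _ HA _ _ E).
      * apply Nat.ltb_ge in Hlt. assert (Hi1 : i + 1 = length s) by lia.
        rewrite Hi1, Nat.Div0.mod_same in hneg by (simpl; lia).
        intro E. apply (Hcyc i hi). rewrite Hi1, Nat.Div0.mod_same by (simpl; lia). exact hneg.
        revert E. rewrite hneg. simpl in hneg |- *. destruct b0; simpl; intro E.
        -- rewrite <- (invK _ _ _ _ HA c1) in E at 2. exact (conj_e _ _ _ _ HA _ _ E).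
        -- exact (conj_e _ _ _ _ HA _ _ E).
    + rewrite Hcp, map_fst_T, <- Hcp. exact Hp.
    + rewrite Hcm, map_fst_T, <- Hcm. exact Hm.
  - intros [ha H] c1 c2 h1 h2. split. apply (notC _ _ _ _ HA C HC); auto.
    intros ds HF Hl Hlt Heq.
    apply (H (map (fun d => mul (mul c2 d) c1) ds)).
    + apply Forall_map. eapply Forall_impl; [|exact HF]. intros d hd.
      apply (subM _ _ _ _ HC); [apply (subM _ _ _ _ HC)|]; auto.
    + rewrite length_map; auto.
    + rewrite length_map; auto.
    + apply (lcancel _ _ _ _ HA c1). rewrite <- (tword_conj _ _ _ _ HA), Heq,
        (m1 _ _ _ _ HA), (m1r _ _ _ _ HA). reflexivity.
Qed.
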